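(* For every integer $k\ge 1$ and every $\mathbf{PFO}^2$ formula $\phi(y)$ whose only free variable is $y$, there is a $\mathbf{PFO}^2$ formula $\chi_{\ge k}(x)$ with only free variable $x$ such that for every string $w$ and every position $n$: $w,n\models\chi_{\ge k}(x)$ iff there are at least $k$ positions $m<n$ with $w,m\models\phi(y)$. Consequently, for every $k\ge 1$ there is also a $\mathbf{PFO}^2$ formula $\chi_{=k}(x)$ expressing that exactly $k$ positions $m<x$ satisfy $\phi$.
   Context: Formulas of $\mathbf{PFO}^2$ over a finite alphabet $\Sigma$ use only two position variables $x,y$ (which may be re-quantified). Atomic formulas are $\pi_a(z)$ ($a\in\Sigma$, $z\in\{x,y\}$; ''position $z$ carries $a$'') and $z<z'$. Formulas are closed under $\wedge,\neg$ and under: from $\phi(x,y)$ form $\exists y<x:\phi(x,y)$ and $\exists x<y:\phi(x,y)$; from $\phi(x)$ with only free variable $x$ form $\exists x<y:\phi(x)$ and $\exists x:\phi(x)$; symmetrically with $x,y$ interchanged. On a string $w$ of length $N$, quantified variables range over $\{1,\dots,N\}$, a free variable may be assigned any position in $\{1,\dots,N+1\}$, and $\pi_a(z)$ holds iff $z\le N$ and $w_z=a$. *)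

(* Defs.v *)
From HB Require Import structures.
From mathcomp Require Import all_boot.
Set Implicit Arguments. Unset Strict Implicit. Unset Printing Implicit Defensive.

Inductive var := VX | VY.
Definition var_eqb (u v : var) : bool :=
  match u, v with VX, VX | VY, VY => true | _, _ => false end.
Lemma var_eqP : Equality.axiom var_eqb.
Proof. by case; case; constructor. Qed.
HB.instance Definition _ := hasDecEq.Build var var_eqP.

Definition other (z : var) : var := if z is VX then VY else VX.

Section PFO2.
Variable Sigma : finType.

(* Raw syntax.  ExLt z f  is  "exists z < (other z) : f",
   Ex z f  is  "exists z : f" (only allowed when f has z as its only
   possible free variable, see [wf]). *)
Inductive form :=
| Lab of Sigma & var
| Lt of var & var
| And of form & form
| Not of form
| ExLt of var & form
| Ex of var & form.

Fixpoint free (z : var) (f : form) : bool :=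
  match f with
  | Lab _ z' => z == z'
  | Lt z1 z2 => (z == z1) || (z == z2)
  | And f g => free z f || free z g
  | Not f => free z f
  | ExLt z' f => (z == other z') || ((z != z') && free z f)
  | Ex z' f => (z != z') && free z f
  end.

Fixpoint wf (f : form) : bool :=
  match f with
  | Lab _ _ | Lt _ _ => true
  | And f g => wf f && wf g
  | Not f => wf f
  | ExLt _ f => wf f
  | Ex z f => ~~ free (other z) f && wf f
  end.

Definition upd (e : var -> nat) (z : var) (m : nat) : var -> nat :=
  fun u => if u == z then m else e u.

(* Semantics on a string w of length N, positions 1..N; free variables may
   take values in 1..N+1; quantified variables range over 1..N. *)
Fixpoint sat (w : seq Sigma) (e : var -> nat) (f : form) : bool :=
  match f with
  | Lab a z => (0 < e z <= size w) && (nth a w (e z).-1 == a)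
  | Lt z1 z2 => e z1 < e z2
  | And f g => sat w e f && sat w e g
  | Not f => ~~ sat w e f
  | ExLt z f => has (fun m => (m < e (other z)) && sat w (upd e z m) f)
                    (iota 1 (size w))
  | Ex z f => has (fun m => sat w (upd e z m) f) (iota 1 (size w))
  end.

Definition asg (vx vy : nat) : var -> nat :=
  fun u => if u is VX then vx else vy.

(* number of positions m < n (m >= 1) with w, m |= phi(y); the value v of
   the non-free variable x is irrelevant *)
Definition count_below (w : seq Sigma) (v n : nat) (phi : form) : nat :=
  count (fun m => sat w (asg v m) phi) (iota 1 n.-1).

End PFO2.

(* Main.v *)
Require Import Defs.
From mathcomp Require Import all_boot.
From mathcomp Require Import zify.
Set Implicit Arguments. Unset Strict Implicit.

Section Aux.
Variable Sigma : finType.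

Fixpoint swapf (f : form Sigma) : form Sigma :=
  match f with
  | Lab a z => Lab a (other z)
  | Lt a b => @Lt Sigma (other a) (other b)
  | And f g => And (swapf f) (swapf g)
  | Not f => Not (swapf f)
  | ExLt z f => ExLt (other z) (swapf f)
  | Ex z f => Ex (other z) (swapf f)
  end.

Lemma sat_free (w : seq Sigma) (f : form Sigma) e1 e2 :
  (forall z, free z f -> e1 z = e2 z) -> sat w e1 f = sat w e2 f.
Proof.
elim: f e1 e2 => [a z|z1 z2|f IHf g IHg|f IHf|z f IHf|z f IHf] e1 e2 H /=.
- by rewrite H /= ?eqxx.
- by rewrite !H /= ?eqxx ?orbT.
- rewrite (IHf e1 e2) ?(IHg e1 e2) // => u Hu; apply: H => /=; rewrite Hu ?orbT //.
- by rewrite (IHf e1 e2).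
- rewrite (H (other z)) /= ?eqxx //; apply: eq_has => m.
  rewrite (IHf (upd e1 z m) (upd e2 z m)) // => u Hu; rewrite /upd.
  case: ifP => // nuz; apply: H => /=; by rewrite nuz /= Hu orbT.
- apply: eq_has => m.
  rewrite (IHf (upd e1 z m) (upd e2 z m)) // => u Hu; rewrite /upd.
  case: ifP => // nuz; apply: H => /=; by rewrite nuz /= Hu.
Qed.

Lemma sat_swap (w : seq Sigma) (f : form Sigma) e :
  sat w e (swapf f) = sat w (fun u => e (other u)) f.
Proof.
elim: f e => [a z|z1 z2|f IHf g IHg|f IHf|z f IHf|z f IHf] e /=.
- by [].
- by [].
- by rewrite IHf IHg.
- by rewrite IHf.
- have -> : other (other z) = z by case: z.
  apply: eq_has => m; rewrite IHf; congr andb; apply: sat_free => u _.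
  by rewrite /upd; case: u; case: z.
- apply: eq_has => m; rewrite IHf; apply: sat_free => u _.
  by rewrite /upd; case: u; case: z.
Qed.

Lemma free_swap (f : form Sigma) u : free u (swapf f) = free (other u) f.
Proof.
elim: f u => [a z|z1 z2|f IHf g IHg|f IHf|z f IHf|z f IHf] u /=.
- by case: u; case: z.
- by case: u; case: z1; case: z2.
- by rewrite IHf IHg.
- by rewrite IHf.
- by rewrite IHf; case: u; case: z.
- by rewrite IHf; case: u; case: z.
Qed.

Lemma wf_swap (f : form Sigma) : wf (swapf f) = wf f.
Proof.
elim: f => [a z|z1 z2|f IHf g IHg|f IHf|z f IHf|z f IHf] /=; rewrite ?IHf ?IHg //.
by rewrite free_swap; case: z.
Qed.

Fixpoint psi (phi : form Sigma) (k : nat) : form Sigma :=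
  match k with
  | 0 => Not (@Lt Sigma VX VX)
  | k.+1 => ExLt VY (And phi (swapf (psi phi k)))
  end.

Lemma L1 (Q : pred nat) n N : 1 <= n <= N.+1 ->
  has (fun m => (m < n) && Q m) (iota 1 N) = has Q (iota 1 n.-1).
Proof.
move=> /andP[n1 nN].
have -> : N = n.-1 + (N - n.-1) by lia.
rewrite iotaD has_cat.
have -> : has (fun m => (m < n) && Q m) (iota (1 + n.-1) (N - n.-1)) = false.
  apply/hasPn => m; rewrite mem_iota => /andP[h _].
  by have -> : (m < n) = false by lia.
rewrite orbF; apply: eq_in_has => m; rewrite mem_iota => /andP[h1 h2].
by have -> : m < n by lia.
Qed.

Lemma L2 (P : pred nat) k j :
  has (fun m => P m && (k <= count P (iota 1 m.-1))) (iota 1 j)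
  = (k < count P (iota 1 j)).
Proof.
elim: j => [|j IH]; first by rewrite /= ltn0.
rewrite -[j.+1]addn1 iotaD has_cat count_cat IH /= orbF addn0 add1n /=.
case: (P j.+1) => /=.
- rewrite addn1 ltnS; apply/idP/idP; [case/orP => //; exact: ltnW | by move->; rewrite orbT].
- by rewrite orbF addn0.
Qed.

Lemma psi_sem (w : seq Sigma) (phi : form Sigma) v k e :
  ~~ free VX phi -> 1 <= e VX <= size w + 1 ->
  sat w e (psi phi k) =
  (k <= count (fun m => sat w (asg v m) phi) (iota 1 (e VX).-1)).
Proof.
move=> Hphi; elim: k e => [|k IH] e He; first by rewrite /= ltnn.
rewrite /=.
rewrite -L2 -(@L1 _ (e VX) (size w)); last by rewrite -(addn1 (size w)).
apply: eq_in_has => m; rewrite mem_iota => /andP[m1 m2].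
congr andb.
have -> : sat w (upd e VY m) phi = sat w (asg v m) phi.
  apply: sat_free; case=> h; [by rewrite h in Hphi | by []].
congr andb.
rewrite sat_swap IH /=; last by rewrite /upd /=; apply/andP; split; lia.
by rewrite /upd.
Qed.

Lemma wf_psi phi k : wf phi -> wf (psi phi k).
Proof. by move=> H; elim: k => //= k IH; rewrite H wf_swap IH. Qed.

Lemma free_psi phi k : free VY (psi phi k) = false.
Proof. by case: k. Qed.

End Aux.

Theorem mainTheorem4 (Sigma : finType) (k : nat) (phi : form Sigma) :
  1 <= k -> wf phi -> ~~ free VX phi ->
  (exists chi : form Sigma, wf chi /\ ~~ free VY chi /\
     forall (w : seq Sigma) (n v : nat),
       1 <= n <= size w + 1 -> 1 <= v <= size w + 1 ->
       (sat w (asg n v) chi <-> k <= count_below w v n phi))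
  /\
  (exists chi : form Sigma, wf chi /\ ~~ free VY chi /\
     forall (w : seq Sigma) (n v : nat),
       1 <= n <= size w + 1 -> 1 <= v <= size w + 1 ->
       (sat w (asg n v) chi <-> count_below w v n phi = k)).
Proof.
move=> _ Hwf Hfx; split.
- exists (psi phi k); split; first exact: wf_psi.
  split; first by rewrite free_psi.
  move=> w n v Hn _; by rewrite (@psi_sem _ _ _ v).
- exists (And (psi phi k) (Not (psi phi k.+1))); split.
    by apply/andP; split; [apply: wf_psi | exact: (wf_psi k.+1 Hwf)].
  split; first by rewrite /= !free_psi.
  move=> w n v Hn _; change (sat w (asg n v) (psi phi k) && ~~ sat w (asg n v) (psi phi k.+1) <-> count_below w v n phi = k).
  rewrite !(@psi_sem _ _ _ v) // /count_below /=.
  rewrite -leqNgt -eqn_leq; split; [by move/eqP | by move->].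
Qed.
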